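(* Let $\mathbf{r}=(r_0,r_1,r_2,\ldots)$ be the regular paperfolding sequence. For every positive integer $k$, the $t$-Hankel determinant $H_k(\mathbf{r},t)$ is a polynomial in $t$ of degree less than or equal to $3$.
   Context: The regular paperfolding sequence $\mathbf{r}$ is defined by the generating function $\sum_{n\ge0}r_nx^n=\sum_{n\ge0}\frac{x^{2^n-1}}{1-x^{2^{n+2}}}$, so $\mathbf{r}=(1,1,0,1,1,0,0,\ldots)$. For a sequence $\mathbf{c}=(c_0,c_1,\ldots)$, a parameter $t$ and $k\ge1$, the $t$-Hankel determinant is $H_k(\mathbf{c},t)=\det(a_{ij})_{0\le i,j\le k-1}$ where $a_{ij}=c_{i+j}$ for $i\ne j$ and $a_{ii}=c_{2i}\,t$ (i.e. the ordinary Hankel determinant with every diagonal entry multiplied by $t$). *)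

(* Defs.v *)
From HB Require Import structures.
From mathcomp Require Import all_boot all_order all_algebra.
Set Implicit Arguments. Unset Strict Implicit. Unset Printing Implicit Defensive.
Import GRing.Theory.
Local Open Scope ring_scope.

(* Regular paperfolding sequence: r_m is the coefficient of x^m in
   sum_{n>=0} x^(2^n - 1) / (1 - x^(2^(n+2)))
     = sum_{n>=0} sum_{j>=0} x^(2^n - 1 + j * 2^(n+2)).
   Only terms with n <= m and j <= m can contribute to x^m, so the
   coefficient is the (finite) number of pairs (n, j) with
   2^n - 1 + j * 2^(n+2) = m. *)
Definition paperfold (m : nat) : nat :=
  (\sum_(n < m.+1) \sum_(j < m.+1) ((2 ^ n - 1 + j * 2 ^ n.+2)%N == m))%N.

Definition tHankel_mx (c : nat -> nat) (k : nat) : 'M[{poly int}]_k :=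
  \matrix_(i < k, j < k)
    (if i == j then (c (i + j)%N)%:R * 'X else (c (i + j)%N)%:R).

Definition tHankel (c : nat -> nat) (k : nat) : {poly int} :=
  \det (tHankel_mx c k).

(* Main.v *)
Require Import Defs.
From mathcomp Require Import all_boot all_order all_algebra.
From mathcomp Require Import zify.
From Stdlib Require Import Lia.
Set Implicit Arguments. Unset Strict Implicit. Unset Printing Implicit Defensive.
Import GRing.Theory.

Lemma pf_even m : paperfold m.*2 = ~~ odd m.
Proof.
rewrite /paperfold big_ord_recl /=.
rewrite [X in (_ + X)%N]big1 ?addn0; last first.
  move=> n _; apply: big1 => j _; case: eqP => // H.
  have : odd (2 ^ (bump 0 n) - 1 + j * 2 ^ (bump 0 n).+2) = odd m.*2 by rewrite H.
  rewrite odd_double /bump /= add1n oddD oddB ?expn_gt0 // !oddM !oddX /=.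
  by rewrite andbF.
have E (j : nat) : ((2 ^ 0 - 1 + j * 2 ^ 2) == m.*2) = (~~ odd m) && (j == m./2).
  rewrite expn0 subnn add0n.
  have := odd_double_half m; case: (odd m) => /= Hm.
    by apply/eqP => H; lia.
  by apply/eqP/eqP; lia.
under eq_bigr do rewrite E.
case: (odd m) => /=; first by rewrite big1.
have hl : (m./2 < m.*2.+1)%N by rewrite ltnS -{2}(odd_double_half m) -addnn; lia.
rewrite (bigD1 (Ordinal hl)) //= eqxx big1 // => i /eqP ne; case: eqP => // h.
by case: ne; apply: val_inj.
Qed.

Lemma cardTZ k : (#|[set i : 'I_k.+1 | ~~ odd i]| <= #|[set j : 'I_k.+1 | odd j && (4 < j)]| + 3)%N.
Proof.
set T := [set i : 'I_k.+1 | ~~ odd i]; set Z := [set j : 'I_k.+1 | odd j && (4 < j)].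
set B := [set i : 'I_k.+1 | 5 < i].
rewrite -(cardsID B T).
have h1 : #|T :&: B| <= #|Z|.
  rewrite -(@card_in_imset _ _ (fun i : 'I_k.+1 => inord (i.-1) : 'I_k.+1)); last first.
    move=> x y; rewrite !inE => /andP[_ x5] /andP[_ y5] /(congr1 val) /=.
    rewrite !inordK; try (have := ltn_ord x; have := ltn_ord y; lia).
    by move=> e; apply: val_inj => /=; lia.
  apply: subset_leq_card; apply/subsetP => y /imsetP [x]; rewrite !inE => /andP [ex x5] ->.
  rewrite inordK; last by have := ltn_ord x; lia.
  move: ex x5; case: x => [[|n] hn] //=; rewrite negbK => -> ? /=; lia.
have h2 : #|T :\: B| <= 3.
  apply: leq_trans (card_size [:: inord 0; inord 2; inord 4]).
  apply: subset_leq_card; apply/subsetP => x; rewrite !inE => /andP [nb ex].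
  case: x nb ex => [[|[|[|[|[|[|n]]]]]] hn] //= _ _.
  - by apply/orP; left; apply/eqP/val_inj; rewrite /= inordK.
  - by apply/orP; right; apply/orP; left; apply/eqP/val_inj; rewrite /= inordK.
  - by apply/orP; right; apply/orP; right; apply/eqP/val_inj; rewrite /= inordK.
lia.
Qed.

Local Open Scope ring_scope.

Lemma size_nat (c : nat) : (size (c%:R : {poly int}) <= 1)%N.
Proof. by rewrite -polyC_natr size_polyC_leq1. Qed.

Section Main.
Variable k : nat.
Let A := tHankel_mx paperfold k.
Definition Qm : 'M[{poly int}]_k :=
  \matrix_(a, b) (((a == b) : nat)%:R - ((odd b && (4 < b)%N && (a + 4 == b)%N) : nat)%:R).

Lemma A_const (i j : 'I_k) : odd i || odd j -> A i j = (paperfold (i + j))%:R.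
Proof.
rewrite /A /tHankel_mx mxE; case: eqP => // e.
rewrite e orbb addnn pf_even => ->; by rewrite mul0r.
Qed.

Lemma A_size (i j : 'I_k) : (size (A i j) <= 2)%N.
Proof.
rewrite /A /tHankel_mx mxE; case: eqP => _.
  by apply: leq_trans (size_mul_leq _ _) _; rewrite size_polyX; have := size_nat (paperfold (i+j)); lia.
by apply: leq_trans (size_nat _) _.
Qed.

Lemma Q_size (l j : 'I_k) : (size (Qm l j) <= 1)%N.
Proof.
rewrite mxE; case: (l == j); case: (_ && _) => /=;
  by rewrite ?subrr ?subr0 ?sub0r ?size_polyN ?size_poly0 ?size_poly1.
Qed.

Lemma term_size (i l j : 'I_k) : (size (A i l * Qm l j)%R <= 2)%N.
Proof.
apply: leq_trans (size_mul_leq _ _) _; have := A_size i l; have := Q_size l j; lia.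
Qed.

Lemma term_size1 (i l j : 'I_k) : odd i || odd j -> (size (A i l * Qm l j)%R <= 1)%N.
Proof.
move=> h; case h2: (odd i || odd l).
  apply: leq_trans (size_mul_leq _ _) _; rewrite A_const //.
  have := size_nat (paperfold (i + l)); have := Q_size l j; lia.
have -> : Qm l j = 0; last by rewrite mulr0 size_poly0.
rewrite mxE.
have oj : odd j by move: h h2; case: (odd i); case: (odd j).
have ol : odd l = false by move: h2; case: (odd l); rewrite ?orbT.
case: eqP => [e|_]; first by move: ol; rewrite e oj.
case: eqP => [e|_]; first by move: oj; rewrite -e oddD ol...
by rewrite !andbF subrr.
Qed.

Lemma pf_shift (i j : nat) : odd i -> odd j -> (4 < j)%N -> paperfold (i + (j - 4)) = paperfold (i + j).
Proof.
move=> oi oj j4.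
have ev : odd (i + j) = false by rewrite oddD oi oj.
have := odd_double_half (i + j); rewrite ev add0n => hm.
set m := (i + j)./2 in hm.
have h2 : (i + (j - 4) = (m - 2).*2)%N by lia.
rewrite h2 -hm !pf_even oddB ?oddD //; lia.
Qed.

Lemma Aq_zero (i j : 'I_k) : odd i -> odd j -> (4 < j)%N -> (A *m Qm) i j = 0.
Proof.
move=> oi oj j4.
have hl : (j - 4 < k)%N by have := ltn_ord j; lia.
pose l0 : 'I_k := Ordinal hl.
have ne : l0 != j by apply/eqP=> /(congr1 val) /=; lia.
rewrite mxE (bigD1 j) //= (bigD1 l0) /=; last by rewrite ne.
rewrite big1 ?addr0; last first.
  move=> l /andP [lj ll0]; rewrite [Qm _ _]mxE (negbTE lj) /=.
  case: eqP => [e|]; last by rewrite andbF subrr mulr0.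
  by case/eqP: ll0; apply: val_inj => /=; lia.
rewrite !A_const ?oi // !mxE eqxx (negbTE ne) oj j4 /=.
have -> : (j + 4 == j)%N = false by apply/negbTE; rewrite -{2}(addn0 j) eqn_add2l.
have -> : (j - 4 + 4 == j)%N by apply/eqP; lia.
by rewrite pf_shift // subr0 sub0r mulrN mulr1 subrr.
Qed.

Lemma detQ : \det Qm = 1.
Proof.
rewrite -det_tr det_trig; last first.
  apply/is_trig_mxP => a b ab; rewrite !mxE.
  have -> : (b == a) = false by apply/negbTE; rewrite neq_ltn ab orbT.
  have -> : (b + 4 == a)%N = false by apply/negbTE; apply/eqP; lia.
  by rewrite andbF subrr.
rewrite big1 // => a _; rewrite !mxE eqxx.
have -> : (a + 4 == a)%N = false by apply/negbTE; apply/eqP; lia.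
by rewrite andbF subr0.
Qed.
End Main.

Lemma size_sum_le (I : finType) (F : I -> {poly int}) b :
  (forall i, (size (F i) <= b)%N) -> (size (\sum_i F i)%R <= b)%N.
Proof.
move=> H; apply: leq_trans (size_sum _ _ _) _; apply/bigmax_leqP => i _; exact: H.
Qed.

Lemma card_lift_pre n (i : 'I_n.+1) (T : {set 'I_n.+1}) :
  (#|[set x | lift i x \in T]| + (i \in T))%N = #|T|.
Proof.
rewrite (cardsD1 i T) addnC; congr (_ + _)%N.
have -> : T :\ i = lift i @: [set x | lift i x \in T].
  apply/setP => y; rewrite !inE.
  apply/andP/imsetP => [[ny yT]|[x]].
    case: (unliftP i y) ny yT => [x ->|->]; last by rewrite eqxx.
    by move=> _ xT; exists x; rewrite ?inE.
  by rewrite inE => xT ->; rewrite eq_sym neq_lift.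
by rewrite card_imset //; apply: lift_inj.
Qed.

Lemma ar1 (a b t' z t : nat) : (a <= 2 -> b <= t' - z + 1 -> t' + 1 = t -> (a + b).-1 <= t + 1)%N.
Proof. lia. Qed.
Lemma ar2 (a b t' z t : nat) : (a <= 1 -> b <= t' - z + 1 -> t' + 0 = t -> (a + b).-1 <= t + 1)%N.
Proof. lia. Qed.
Lemma ar3 (a b t' z' z t : nat) : (a <= 1 -> b <= t' - z' + 1 -> z' + 1 = z -> t' + 1 = t -> (a + b).-1 <= t - z + 1)%N.
Proof. lia. Qed.

Lemma key n (A : 'M[{poly int}]_n) (T Z : {set 'I_n}) :
 (forall i j, size (A i j) <= 2)%N ->
 (forall i j, i \notin T -> size (A i j) <= 1)%N ->
 (forall i j, j \in Z -> size (A i j) <= 1)%N ->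
 (forall i j, j \in Z -> i \notin T -> A i j = 0) ->
 (size (\det A)%R <= #|T| - #|Z| + 1)%N.
Proof.
elim: n A T Z => [|n IH] A T Z h2 h1 hz h0.
  by rewrite det_mx00 size_poly1 leq_addl.
have Hm i j T' Z' : T' = [set x | lift i x \in T] -> Z' = [set y | lift j y \in Z] ->
   (size (\det (row' i (col' j A))) <= #|T'| - #|Z'| + 1)%N.
  move=> -> ->; apply: IH => x y; rewrite ?inE ?mxE.
  - exact: h2.
  - exact: h1.
  - exact: hz.
  - exact: h0.
have CL := @card_lift_pre n.
case: (set_0Vmem Z) => [Z0|[j jZ]].
  rewrite Z0 cards0 subn0 (expand_det_row _ ord0); apply: size_sum_le => j.
  apply: leq_trans (size_mul_leq _ _) _.
  rewrite /cofactor size_Msign.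
  have := Hm ord0 j _ _ erefl erefl.
  have := CL ord0 T.
  case T0: (ord0 \in T) => /= HT hb.
    exact: ar1 (h2 ord0 j) hb HT.
  have := h1 ord0 j; rewrite T0 => /(_ isT) ha.
  exact: ar2 ha hb HT.
rewrite (expand_det_col _ j); apply: size_sum_le => i.
case iT: (i \in T); last by rewrite h0 ?iT // mul0r size_poly0.
apply: leq_trans (size_mul_leq _ _) _.
rewrite /cofactor size_Msign.
have := Hm i j _ _ erefl erefl.
have := CL i T; have := CL j Z; rewrite iT jZ /= => HZ HT hb.
exact: ar3 (hz i j jZ) hb HZ HT.
Qed.

Lemma ar4 (t z : nat) : (t <= z + 3 -> t - z + 1 <= 4)%N.
Proof. lia. Qed.

Theorem theorem1p4 : forall k : nat, (0 < k)%N ->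
  (size (tHankel paperfold k) <= 4)%N.
Proof.
case=> // k _.
have E : \det (tHankel_mx paperfold k.+1) = \det (tHankel_mx paperfold k.+1 *m Qm k.+1)
  by rewrite det_mulmx detQ mulr1.
rewrite /tHankel E.
apply: leq_trans (key (T := [set i : 'I_k.+1 | ~~ odd i])
                      (Z := [set j : 'I_k.+1 | odd j && (4 < j)%N]) _ _ _ _) _.
- by move=> i j; rewrite mxE; apply: size_sum_le => l; apply: term_size.
- move=> i j; rewrite inE negbK => oi; rewrite mxE; apply: size_sum_le => l.
  by apply: term_size1; rewrite oi.
- move=> i j; rewrite inE => /andP [oj _]; rewrite mxE; apply: size_sum_le => l.
  by apply: term_size1; rewrite oj orbT.
- by move=> i j; rewrite !inE negbK => /andP [oj j4] oi; apply: Aq_zero.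
- exact: ar4 (cardTZ k).
Qed.
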